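(* Fix an integer $k\geq1$ and $V=\{0,\ldots,k\}$. Let $\varphi$ be a Boolean function on $V$ and let $\nu\neq\nu'$ be two valuations such that there is a simple path $\nu=\nu_0-\nu_1-\cdots-\nu_{n+1}=\nu'$ in $\mathbf G_V$ with $n\geq0$ and $\nu_i\notin\mathrm{sat}(\varphi)$ for all $1\leq i\leq n$. Then: (Chainkilling) if $(-1)^{|\nu|}\neq(-1)^{|\nu'|}$ (i.e., $n$ is even) and $\{\nu,\nu'\}\subseteq\mathrm{sat}(\varphi)$, then, defining $\varphi'$ by $\mathrm{sat}(\varphi')=\mathrm{sat}(\varphi)\setminus\{\nu,\nu'\}$, we have $\varphi\simeq\varphi'$ (more precisely $\varphi$ can be transformed into $\varphi'$ by a finite sequence of $\xrightarrow{\pm}$ steps); (Chainswapping) if $(-1)^{|\nu|}=(-1)^{|\nu'|}$ (i.e., $n$ is odd), $\nu\in\mathrm{sat}(\varphi)$ and $\nu'\notin\mathrm{sat}(\varphi)$, then, defining $\varphi'$ by $\mathrm{sat}(\varphi')=(\mathrm{sat}(\varphi)\setminus\{\nu\})\cup\{\nu'\}$, $\varphi$ can be transformed into $\varphi'$ by a finite sequence of $\xrightarrow{\pm}$ steps.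
   Context: A valuation is a subset $\nu\subseteq V$; $\nu^{(l)}$ is $\nu$ with membership of $l$ flipped. A Boolean function on $V$ is a map $\varphi:2^V\to\{\text{false},\text{true}\}$; $\mathrm{sat}(\varphi)$ is its set of satisfying valuations. $\mathbf G_V$ is the undirected graph with vertex set $2^V$ and edges $\{\nu,\nu^{(l)}\}$ for $\nu\subseteq V$, $l\in V$. Write $\varphi\xrightarrow{+(\nu,l)}\varphi'$ if $\nu,\nu^{(l)}\notin\mathrm{sat}(\varphi)$ and $\mathrm{sat}(\varphi')=\mathrm{sat}(\varphi)\cup\{\nu,\nu^{(l)}\}$, and $\varphi\xrightarrow{-(\nu,l)}\varphi'$ if $\varphi'\xrightarrow{+(\nu,l)}\varphi$. Write $\varphi\xrightarrow{\pm}\varphi'$ if one of these holds for some $\nu,l$; $\simeq$ is the reflexive-transitive closure of $\xrightarrow{\pm}$. *)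

(* Defs.v *)
From mathcomp Require Import all_boot.
From Stdlib Require Import Relations.
Set Implicit Arguments. Unset Strict Implicit. Unset Printing Implicit Defensive.

(* Variables V = {0,...,k} = 'I_k.+1; valuations are subsets of V. *)
Definition valuation (k : nat) := {set 'I_k.+1}.

(* A Boolean function on V: a map 2^V -> bool (finite function, so that
   functions with the same satisfying set are equal). *)
Definition boolfun (k : nat) := {ffun valuation k -> bool}.

Definition sat k (phi : boolfun k) : {set valuation k} := [set nu | phi nu].

Definition flip k (nu : valuation k) (l : 'I_k.+1) : valuation k :=
  if l \in nu then nu :\ l else l |: nu.

Definition adjG k (nu mu : valuation k) : Prop := exists l, mu = flip nu l.

Definition plus_step k (phi phi' : boolfun k) (nu : valuation k) (l : 'I_k.+1) : Prop :=
  nu \notin sat phi /\ flip nu l \notin sat phi /\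
  sat phi' = sat phi :|: [set nu; flip nu l].

Definition pm_step k (phi phi' : boolfun k) : Prop :=
  exists nu l, plus_step phi phi' nu l \/ plus_step phi' phi nu l.

Definition pm_equiv k : relation (boolfun k) := clos_refl_trans _ (@pm_step k).

(* nu = nu_0 - nu_1 - ... - nu_{n+1} = nu' with inner = [nu_1; ...; nu_n]:
   a simple path in G_V. *)
Definition simple_path k (nu nu' : valuation k) (inner : seq (valuation k)) : Prop :=
  let s := nu :: rcons inner nu' in
  uniq s /\ (forall i, i.+1 < size s -> adjG (nth nu s i) (nth nu s i.+1)).

(* Main.v *)
Require Import Defs.
From mathcomp Require Import all_boot.
From Stdlib Require Import Relations.
Set Implicit Arguments. Unset Strict Implicit. Unset Printing Implicit Defensive.

Section S.
Variable k : nat.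
Implicit Types (S : {set valuation k}) (nu mu : valuation k).

Definition mk S : boolfun k := [ffun x => x \in S].
Lemma mkK (phi : boolfun k) : mk (sat phi) = phi.
Proof. by apply/ffunP => x; rewrite ffunE inE. Qed.
Lemma satmk S : sat (mk S) = S.
Proof. by apply/setP => x; rewrite !inE ffunE. Qed.

Lemma plusS S nu mu : nu \notin S -> mu \notin S -> adjG nu mu ->
  pm_equiv (mk S) (mk (S :|: [set nu; mu])).
Proof.
move=> h1 h2 [l El]; subst mu; apply: rt_step; exists nu, l; left.
by rewrite /plus_step !satmk.
Qed.

Lemma minusS S nu mu : nu \in S -> mu \in S -> adjG nu mu ->
  pm_equiv (mk S) (mk (S :\: [set nu; mu])).
Proof.
move=> h1 h2 [l El]; subst mu; apply: rt_step; exists nu, l; right.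
rewrite /plus_step !satmk !inE.
split; first by rewrite eqxx.
split; first by rewrite eqxx orbT.
apply/setP => x; rewrite !inE.
have [->|n1] := eqVneq x nu; first by rewrite h1.
have [->|n2] := eqVneq x (flip nu l); first by rewrite h2 /= ?orbT.
by rewrite /= ?orbF.
Qed.

Lemma shiftS S v0 v1 v2 : v0 \in S -> v1 \notin S -> v2 \notin S ->
  v0 != v1 -> v1 != v2 -> v0 != v2 -> adjG v0 v1 -> adjG v1 v2 ->
  pm_equiv (mk S) (mk (S :\ v0 :|: [set v2])).
Proof.
move=> h0 h1 h2 n01 n12 n02 a01 a12.
apply: rt_trans (plusS h1 h2 a12) _.
have -> : S :\ v0 :|: [set v2] = (S :|: [set v1; v2]) :\: [set v0; v1].
  apply/setP => x; rewrite !inE.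
  have [->|m0] := eqVneq x v0.
    by rewrite ?(negbTE n02) ?(negbTE n01) /= ?andbF.
  have [->|m1] := eqVneq x v1.
    by rewrite ?(negbTE n12) ?(negbTE h1) /= ?andbF.
  have [->|m2] := eqVneq x v2.
    by rewrite /= ?orbT ?andbT.
  by rewrite /= ?orbF ?andbT.
apply: minusS; last by [].
  by rewrite !inE h0.
by rewrite !inE eqxx !orbT.
Qed.

Definition adjb nu mu := [exists l, mu == flip nu l].
Lemma adjbP nu mu : reflect (adjG nu mu) (adjb nu mu).
Proof.
apply: (iffP existsP) => -[l].
  by move=> /eqP ->; exists l.
by move=> ->; exists l.
Qed.

Lemma adj_odd nu mu : adjb nu mu -> odd #|mu| = ~~ odd #|nu|.
Proof.
case/existsP => l /eqP ->; rewrite /flip.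
case: ifP => hl.
  by rewrite [#|nu|](cardsD1 l) hl /= negbK.
by rewrite cardsU1 hl.
Qed.

Lemma path_odd x p : path adjb x p -> odd #|last x p| = odd #|x| (+) odd (size p).
Proof.
elim: p x => [|y p IH] x /=; first by rewrite addbF.
case/andP => a /IH ->; rewrite (adj_odd a).
by case: (odd #|x|); case: (odd (size p)).
Qed.

Lemma main n : forall inner nu nu' S, size inner <= n ->
  uniq (nu :: rcons inner nu') -> path adjb nu (rcons inner nu') ->
  (forall mu, mu \in inner -> mu \notin S) -> nu \in S ->
  (~~ odd (size inner) -> nu' \in S -> pm_equiv (mk S) (mk (S :\: [set nu; nu'])))
  /\ (odd (size inner) -> nu' \notin S -> pm_equiv (mk S) (mk (S :\ nu :|: [set nu']))).
Proof.
elim: n => [|n IH] [|v1 [|v2 rest]] nu nu' S //= hs hu hp hin h0.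
- split => // _ h1; apply: minusS => //; apply/adjbP; by move: hp; rewrite andbT.
- split => // _ h1; apply: minusS => //; apply/adjbP; by move: hp; rewrite andbT.
- split => // _ h2.
  move: hu hp; rewrite !inE !negb_or => /and3P[/andP[n01 n02] n12 _] /and3P[a01 a12 _].
  apply: (shiftS (v1:=v1)) => //.
  + by apply: hin; rewrite mem_head.
  + by apply/adjbP.
  + by apply/adjbP.
- have hv1 : v1 \notin S by apply: hin; rewrite mem_head.
  have hv2 : v2 \notin S by apply: hin; rewrite in_cons mem_head orbT.
  move: hu => /and4P[hu0 hu1 hu2 hur].
  move: hu0 hu1; rewrite !inE !mem_rcons !inE !negb_or => /and4P[n01 n02 n0' n0r] /and3P[n12 n1' n1r].
  move: hu2; rewrite mem_rcons inE negb_or => /andP[n2' n2r].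
  move: hp => /and3P[a01 a12 hpr].
  have sh := shiftS h0 hv1 hv2 n01 n12 n02 (elimT (adjbP _ _) a01) (elimT (adjbP _ _) a12).
  set S2 := S :\ nu :|: [set v2] in sh.
  have hs' : size rest <= n by rewrite ltnS in hs; apply: ltnW.
  have hu' : uniq (v2 :: rcons rest nu') by rewrite /= mem_rcons inE negb_or n2' n2r.
  have hin' : forall mu, mu \in rest -> mu \notin S2.
    move=> mu hm; rewrite !inE negb_or; apply/andP; split.
      by rewrite (negbTE (hin mu _)) ?andbF // !inE hm !orbT.
    by apply/eqP => e; rewrite -e hm in n2r.
  have h2 : v2 \in S2 by rewrite !inE eqxx orbT.
  have [IHk IHs] := IH rest v2 nu' S2 hs' hu' hpr hin' h2.
  split.
  + move=> ho h'.
    have h2' : nu' \in S2 by rewrite !inE h' eq_sym n0' /= ?andbT ?orbT.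
    apply: rt_trans sh _.
    have -> : S :\: [set nu; nu'] = S2 :\: [set v2; nu'].
      apply/setP => x; rewrite !inE.
      have [->|m0] := eqVneq x nu; first by rewrite ?(negbTE n02) /= ?andbF.
      have [->|m2] := eqVneq x v2; first by rewrite /= (negbTE hv2) ?andbF.
      by rewrite /= orbF.
    by apply: IHk h2'; rewrite !negbK in ho.
  + move=> ho h'.
    have h2' : nu' \notin S2 by rewrite !inE (negbTE h') ?andbF eq_sym (negbTE n2').
    apply: rt_trans sh _.
    have -> : S :\ nu :|: [set nu'] = S2 :\ v2 :|: [set nu'].
      apply/setP => x; rewrite !inE.
      have [->|m0] := eqVneq x nu; first by rewrite ?(negbTE n02) /= ?andbF.
      have [->|m2] := eqVneq x v2; first by rewrite /= (negbTE hv2) ?andbF.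
      by rewrite /= orbF.
    by apply: IHs h2'; rewrite !negbK in ho.
Qed.
End S.

Theorem lemma5p10 (k : nat) (hk : 1 <= k) (phi : boolfun k)
  (nu nu' : valuation k) (inner : seq (valuation k)) :
  nu != nu' ->
  simple_path nu nu' inner ->
  (forall mu, mu \in inner -> mu \notin sat phi) ->
  (* Chainkilling *)
  (odd #|nu| != odd #|nu'| -> nu \in sat phi -> nu' \in sat phi ->
     forall phi' : boolfun k, sat phi' = sat phi :\: [set nu; nu'] ->
     pm_equiv phi phi')
  /\
  (* Chainswapping *)
  (odd #|nu| = odd #|nu'| -> nu \in sat phi -> nu' \notin sat phi ->
     forall phi' : boolfun k, sat phi' = (sat phi :\ nu) :|: [set nu'] ->
     pm_equiv phi phi').
Proof.
move=> hne [hu hp] hin.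
have hpath : path (@adjb k) nu (rcons inner nu').
  apply/(pathP nu) => i hi; apply/adjbP; apply: (hp i) => /=.
  by rewrite size_rcons in hi *; rewrite ltnS.
have hpo := path_odd hpath.
rewrite last_rcons size_rcons /= in hpo.
split.
- move=> hodd h0 h1 phi' Ephi'.
  have [K _] := main (leqnn (size inner)) hu hpath hin h0.
  rewrite -[phi]mkK -[phi']mkK Ephi'; apply: K h1.
  by move: hodd; rewrite hpo; case: (odd #|nu|); case: (odd (size inner)).
- move=> hodd h0 h1 phi' Ephi'.
  have [_ W] := main (leqnn (size inner)) hu hpath hin h0.
  rewrite -[phi]mkK -[phi']mkK Ephi'; apply: W h1.
  by move: hodd; rewrite hpo; case: (odd #|nu|); case: (odd (size inner)).
Qed.
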